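(* Let $n>3$ be an integer and let $G=C_{2n}(2,1,n)$ (a $5$-regular circulant graph). Then $G$ is word-representable and $R(G)\leq 3$. Furthermore, for $n=3$, the graph $C_6(2,1,3)$ is word-representable and $R(C_6(2,1,3))=1$.
   Context: Two distinct letters $x,y$ alternate in a word $w$ if, after deleting all other letters from $w$, the resulting word is of the form $xyxy\cdots$ or $yxyx\cdots$ (of even or odd length). A graph $G=(V,E)$ is word-representable if there is a word $w$ over the alphabet $V$, containing every letter of $V$ at least once, such that for all distinct $x,y\in V$, $xy\in E$ if and only if $x$ and $y$ alternate in $w$. A word is $k$-uniform if every letter occurs in it exactly $k$ times; $G$ is $k$-representable if some $k$-uniform word represents it, and the representation number $R(G)$ of a word-representable graph $G$ is the least such $k$. For an integer $m$ and a set $R$ of positive integers each at most $m/2$, the circulant graph $C_m(R)$ has vertex set $\{0,1,\dots,m-1\}$, with $i$ and $j$ adjacent iff $\min(|i-j|,\,m-|i-j|)\in R$. $C_{2n}(2,1,n)$ denotes the circulant graph on $2n$ vertices with jump set $\{1,2,n\}$. *)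

(* Defs.v *)
From mathcomp Require Import all_boot.
Set Implicit Arguments. Unset Strict Implicit. Unset Printing Implicit Defensive.

(* A graph on a finite vertex type V is given by its adjacency relation. *)

Definition restrict2 {V : eqType} (w : seq V) (x y : V) : seq V :=
  [seq z <- w | (z == x) || (z == y)].

Definition alternate {V : eqType} (w : seq V) (x y : V) : Prop :=
  exists len : nat,
    restrict2 w x y = mkseq (fun i => if odd i then y else x) len \/
    restrict2 w x y = mkseq (fun i => if odd i then x else y) len.

Definition represents {V : finType} (e : rel V) (w : seq V) : Prop :=
  (forall v : V, v \in w) /\
  (forall x y : V, x != y -> (e x y <-> alternate w x y)).

Definition word_representable {V : finType} (e : rel V) : Prop :=
  exists w : seq V, represents e w.

Definition uniform {V : eqType} (k : nat) (w : seq V) : Prop :=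
  forall v : V, count_mem v w = k.

Definition k_representable {V : finType} (e : rel V) (k : nat) : Prop :=
  exists w : seq V, uniform k w /\ represents e w.

Definition is_representation_number {V : finType} (e : rel V) (k : nat) : Prop :=
  k_representable e k /\ forall j, j < k -> ~ k_representable e j.

Definition circulant (m : nat) (R : seq nat) : rel 'I_m :=
  fun i j => let d := maxn i j - minn i j in minn d (m - d) \in R.

Definition C2n_21n (n : nat) : rel 'I_(2 * n) := @circulant (2 * n) [:: 1; 2; n].
Arguments C2n_21n n : clear implicits.
Arguments circulant m R : clear implicits.

(* Main.v *)
Require Import Defs.
From mathcomp Require Import all_boot zify.
From Stdlib Require Import Classical.


Definition mkalt {V : Type} (x y : V) (len : nat) : seq V :=
  mkseq (fun i => if odd i then y else x) len.

Lemma mkaltS {V : Type} (x y : V) len :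
  mkalt x y len.+1 = rcons (mkalt x y len) (if odd len then y else x).
Proof. by rewrite /mkalt /mkseq -addn1 iotaD map_cat cats1 add0n. Qed.

Lemma count_rcons_mem {V : eqType} (s : seq V) a z :
  count_mem z (rcons s a) = count_mem z s + (a == z).
Proof. by rewrite -cats1 count_cat /= addn0. Qed.

Lemma mkalt_count {V : eqType} (x y : V) len : x != y ->
  count_mem x (mkalt x y len) = count_mem y (mkalt x y len) + odd len.
Proof.
move=> xy; elim: len => [|l IH]; first by rewrite /mkalt.
rewrite mkaltS !count_rcons_mem IH /=.
case: (odd l) => /=; rewrite ?eqxx ?(negbTE xy) ?(eq_sym y) ?(negbTE xy); lia.
Qed.

Lemma size_mkalt {V : Type} (x y : V) len : size (mkalt x y len) = len.
Proof. by rewrite /mkalt size_mkseq. Qed.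

Definition Cgood {V : eqType} (x y : V) (s : seq V) : Prop :=
  count_mem y s <= count_mem x s <= (count_mem y s).+1.

Lemma take_rcons_cases {V : Type} (w : seq V) a k :
  take k (rcons w a) = if k <= size w then take k w else rcons w a.
Proof.
rewrite -cats1 take_cat; case: ltngtP => H.
- by [].
- by rewrite take_oversize ?cats1 // /=; lia.
- by rewrite H subnn take0 cats0 take_size.
Qed.

Lemma count_restrict {V : eqType} (w : seq V) x y z :
  (z == x) || (z == y) -> count_mem z (restrict2 w x y) = count_mem z w.
Proof.
move=> Hz; rewrite /restrict2 count_filter; apply: eq_count => u /=.
by case: eqP => //= ->.
Qed.

Lemma key {V : eqType} (x y : V) : x != y -> forall w : seq V,
  (exists len, restrict2 w x y = mkalt x y len) <-> (forall k, Cgood x y (take k w)).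
Proof.
move=> xy; elim/last_ind => [|w a IH].
  split => [_ k|_]; first by rewrite /Cgood /=.
  by exists 0.
have Hall : (forall k, Cgood x y (take k (rcons w a))) <->
   ((forall k, Cgood x y (take k w)) /\ Cgood x y (rcons w a)).
  split => [H|[H1 H2] k].
    split; last by have := H (size w).+1; rewrite take_oversize // size_rcons.
    move=> k; have := H (minn k (size w)); rewrite take_rcons_cases.
    have -> : minn k (size w) <= size w by lia.
    by rewrite take_min take_size.
  rewrite take_rcons_cases; case: ifP => _ //.
rewrite Hall {Hall}.
have Hw : Cgood x y w <-> Cgood x y w by [].
rewrite /restrict2 filter_rcons -/(restrict2 w x y).
case: ifP => Ha.
- split.
  + move=> [[|l]]; first by move/(congr1 size); rewrite size_rcons size_mkalt.
    rewrite mkaltS => /eqP; rewrite eqseq_rcons => /andP [/eqP Hr /eqP Hal].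
    have IHw : forall k, Cgood x y (take k w) by apply/IH; exists l.
    split => //.
    have := mkalt_count x y l xy; rewrite -Hr !count_restrict ?eqxx ?orbT //.
    rewrite /Cgood !count_rcons_mem Hal.
    case: (odd l) => /=; rewrite ?eqxx ?(negbTE xy) ?(eq_sym y) ?(negbTE xy); lia.
  + move=> [H1 H2]; have [l Hl] : exists len, restrict2 w x y = mkalt x y len by apply/IH.
    exists l.+1; rewrite mkaltS -Hl; congr rcons.
    have := mkalt_count x y l xy; rewrite -Hl !count_restrict ?eqxx ?orbT //.
    move: H2; rewrite /Cgood !count_rcons_mem.
    case/orP: Ha => /eqP ->; case: (odd l) => /=;
      rewrite ?eqxx ?(negbTE xy) ?(eq_sym y) ?(negbTE xy) //; lia.
- split.
  + move=> H; have IHw := (proj1 IH H); split => //.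
    have := IHw (size w); rewrite take_size /Cgood !count_rcons_mem.
    move/negbT: Ha; rewrite negb_or => /andP [/negbTE -> /negbTE ->]; lia.
  + by move=> [H1 _]; apply/IH.
Qed.


Lemma alt_iff {V : eqType} (w : seq V) x y : x != y ->
  alternate w x y <-> (forall k, Cgood x y (take k w)) \/ (forall k, Cgood y x (take k w)).
Proof.
move=> xy.
have Hs : restrict2 w y x = restrict2 w x y.
  by apply: eq_filter => z; rewrite orbC.
have K1 := key x y xy w.
have yx : y != x by rewrite eq_sym.
have K2 := key y x yx w. rewrite Hs in K2.
rewrite /alternate; split.
- move=> [len [H|H]]; [left; apply/K1|right; apply/K2]; by exists len.
- move=> [H|H].
  + by have [len Hl] := proj2 K1 H; exists len; left.
  + by have [len Hl] := proj2 K2 H; exists len; right.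
Qed.

Definition S3 a0 a1 a2 k := (a0 < k) + (a1 < k) + (a2 < k).

Definition Ilv a0 a1 a2 b0 b1 b2 := a0 < b0 < a1 /\ a1 < b1 < a2 /\ a2 < b2.

Lemma interleave_iff a0 a1 a2 b0 b1 b2 : a0 < a1 < a2 -> b0 < b1 < b2 ->
  (a0 != b0) && (a0 != b1) && (a0 != b2) && (a1 != b0) && (a1 != b1) && (a1 != b2) && (a2 != b0) && (a2 != b1) && (a2 != b2) ->
  (forall k, S3 b0 b1 b2 k <= S3 a0 a1 a2 k <= (S3 b0 b1 b2 k).+1) <-> Ilv a0 a1 a2 b0 b1 b2.
Proof.
rewrite /S3 /Ilv => Ha Hb Hd; split.
- move=> H.
  have h1 : a0 < b0 by have := H b0.+1; lia.
  have h2 : b0 < a1 by have := H a1.+1; lia.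
  have h3 : a1 < b1 by have := H b1.+1; lia.
  have h4 : b1 < a2 by have := H a2.+1; lia.
  have h5 : a2 < b2 by have := H b2.+1; lia.
  lia.
- move=> HI k; lia.
Qed.


Definition g1 n j := if j + n + 2 < 2*n then j+n+2 else j+n+2-2*n.
Definition g2 n j := if j + 3 < 2*n then j+3 else j+3-2*n.
Definition fw n p := if p %% 3 == 0 then p %/ 3 else if p %% 3 == 1 then g1 n (p %/ 3) else g2 n (p %/ 3).
Definition wnat n := mkseq (fw n) (6*n).

Definition Q0 n x := if x < 3 then 3*x else if x < n+2 then 3*(x-3)+2 else 3*(x-n-2)+1.
Definition Q1 n x := if x < 3 then 3*(x+n-2)+1 else if x < n+2 then 3*x else 3*(x-3)+2.
Definition Q2 n x := if x < 3 then 3*(x+2*n-3)+2 else if x < n+2 then 3*(x+n-2)+1 else 3*x.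

Lemma fpos n x p : 3 < n -> x < 2*n -> p < 6*n ->
  (fw n p == x) = [|| p == Q0 n x, p == Q1 n x | p == Q2 n x].
Proof.
move=> Hn Hx Hp; rewrite /fw /g1 /g2 /Q0 /Q1 /Q2.
case: (ltnP x 3) => H1; [|case: (ltnP x (n+2)) => H2];
repeat case: ifP => ?; lia.
Qed.

Lemma Q_lt n x : 3 < n -> x < 2*n ->
  Q0 n x < Q1 n x < Q2 n x /\ Q2 n x < 6*n.
Proof.
move=> Hn Hx; rewrite /Q0 /Q1 /Q2.
case: (ltnP x 3) => H1; [|case: (ltnP x (n+2)) => H2]; lia.
Qed.

Lemma cnt_iota n x K : 3 < n -> x < 2*n -> K <= 6*n ->
  count (fun p => fw n p == x) (iota 0 K) = S3 (Q0 n x) (Q1 n x) (Q2 n x) K.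
Proof.
move=> Hn Hx; elim: K => [|K IH] HK; first by rewrite /S3.
have HK' : K <= 6*n by lia.
have HK'' : K < 6*n by lia.
rewrite -addn1 iotaD count_cat (IH HK') /= add0n addn0 (fpos n x K Hn Hx HK'').
have := Q_lt n x Hn Hx; rewrite /S3; lia.
Qed.

Lemma cnt_take n x k : 3 < n -> x < 2*n ->
  count_mem x (take k (wnat n)) = S3 (Q0 n x) (Q1 n x) (Q2 n x) k.
Proof.
move=> Hn Hx; rewrite /wnat /mkseq -map_take count_map take_iota.
rewrite (@eq_count _ _ (fun p => fw n p == x)) //.
rewrite cnt_iota //; last by lia.
have := Q_lt n x Hn Hx; rewrite /S3; lia.
Qed.


Lemma fw_lt n p : 3 < n -> p < 6*n -> fw n p < 2*n.
Proof. move=> Hn Hp; rewrite /fw /g1 /g2; repeat case: ifP => ?; lia. Qed.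

Definition wo n : seq 'I_(2*n) := pmap insub (wnat n).

Lemma wo_val n : 3 < n -> map val (wo n) = wnat n.
Proof.
move=> Hn; rewrite /wo (pmap_filter (insubK _)); apply/all_filterP.
rewrite /wnat /mkseq all_map; apply/allP => p; rewrite mem_iota add0n => /andP [_ Hp] /=.
by case: insubP => //=; rewrite fw_lt.
Qed.

Lemma cnt_wo n (x : 'I_(2*n)) k : 3 < n ->
  count_mem x (take k (wo n)) = S3 (Q0 n x) (Q1 n x) (Q2 n x) k.
Proof.
move=> Hn; rewrite -(cnt_take n x k Hn (ltn_ord x)) -(wo_val n Hn) -map_take count_map.
by apply: eq_count => u /=; rewrite val_eqE.
Qed.

Lemma Q_distinct n x y : 3 < n -> x < 2*n -> y < 2*n -> x != y ->
  (Q0 n x != Q0 n y) && (Q0 n x != Q1 n y) && (Q0 n x != Q2 n y) && (Q1 n x != Q0 n y) && (Q1 n x != Q1 n y) && (Q1 n x != Q2 n y) && (Q2 n x != Q0 n y) && (Q2 n x != Q1 n y) && (Q2 n x != Q2 n y).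
Proof.
move=> Hn Hx Hy xy; rewrite /Q0 /Q1 /Q2.
case: (ltnP x 3) => H1; [|case: (ltnP x (n+2)) => H2];
case: (ltnP y 3) => H3; try case: (ltnP y (n+2)) => H4; lia.
Qed.



Lemma edge_lt n x y : 3 < n -> x < y -> y < 2*n ->
  [|| y - x == 1, y - x == 2, y - x == n, y - x == 2*n-1 | y - x == 2*n-2] <->
  Ilv (Q0 n x) (Q1 n x) (Q2 n x) (Q0 n y) (Q1 n y) (Q2 n y) \/
  Ilv (Q0 n y) (Q1 n y) (Q2 n y) (Q0 n x) (Q1 n x) (Q2 n x).
Proof.
move=> Hn xy Hy; rewrite /Ilv /Q0 /Q1 /Q2.
case: (ltnP x 3) => H1; [|case: (ltnP x (n+2)) => H2];
case: (ltnP y 3) => H3; try case: (ltnP y (n+2)) => H4.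
all: split; [move/orP=> [H|/orP [H|/orP [H|/orP [H|H]]]]; lia| move=> H; lia].
Qed.


Lemma edge_arith n x y : 3 < n -> x < 2*n -> y < 2*n -> x != y ->
  (minn (maxn x y - minn x y) (2*n - (maxn x y - minn x y)) \in [:: 1; 2; n]) <->
  Ilv (Q0 n x) (Q1 n x) (Q2 n x) (Q0 n y) (Q1 n y) (Q2 n y) \/
  Ilv (Q0 n y) (Q1 n y) (Q2 n y) (Q0 n x) (Q1 n x) (Q2 n x).
Proof.
move=> Hn Hx Hy xy; rewrite !inE.
case: (ltngtP x y) => H; last by rewrite H eqxx in xy.
- rewrite -(edge_lt n x y Hn H Hy); split => H'; lia.
- have := edge_lt n y x Hn H Hx => E.
  have E' : [|| x - y == 1, x - y == 2, x - y == n, x - y == 2*n-1 | x - y == 2*n-2] <->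
     Ilv (Q0 n x) (Q1 n x) (Q2 n x) (Q0 n y) (Q1 n y) (Q2 n y) \/
     Ilv (Q0 n y) (Q1 n y) (Q2 n y) (Q0 n x) (Q1 n x) (Q2 n x).
    by rewrite E; split => -[]; auto.
  rewrite -E'; split => H'; lia.
Qed.

Lemma size_wo n : 3 < n -> size (wo n) = 6*n.
Proof. by move=> Hn; rewrite -(size_map val) wo_val // /wnat size_mkseq. Qed.

Lemma uniform_wo n : 3 < n -> uniform 3 (wo n).
Proof.
move=> Hn v; rewrite -(take_size (wo n)) cnt_wo // size_wo //.
have := Q_lt n v Hn (ltn_ord v); rewrite /S3; lia.
Qed.

Lemma rep3 n : 3 < n -> k_representable (C2n_21n n) 3.
Proof.
move=> Hn; exists (wo n); split; first exact: uniform_wo.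
split.
  by move=> v; rewrite -has_pred1 has_count uniform_wo.
move=> x y xy.
have xy' : val x != val y by [].
rewrite alt_iff // /C2n_21n /circulant /=.
rewrite (edge_arith n x y Hn (ltn_ord x) (ltn_ord y) xy').
have Hyx : val y != val x by rewrite eq_sym.
have I1 := interleave_iff _ _ _ _ _ _ (proj1 (Q_lt n x Hn (ltn_ord x))) (proj1 (Q_lt n y Hn (ltn_ord y)))
   (Q_distinct n x y Hn (ltn_ord x) (ltn_ord y) xy').
have I2 := interleave_iff _ _ _ _ _ _ (proj1 (Q_lt n y Hn (ltn_ord y))) (proj1 (Q_lt n x Hn (ltn_ord x)))
   (Q_distinct n y x Hn (ltn_ord y) (ltn_ord x) Hyx).
rewrite /Cgood.
split.
- move=> [H|H]; [left|right].
  + by move=> k; rewrite !cnt_wo //; exact: (proj2 I1 H k).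
  + by move=> k; rewrite !cnt_wo //; exact: (proj2 I2 H k).
- move=> [H|H]; [left|right].
  + by apply: (proj1 I1) => k; have := H k; rewrite !cnt_wo.
  + by apply: (proj1 I2) => k; have := H k; rewrite !cnt_wo.
Qed.

Lemma min_rep {V : finType} (e : rel V) : k_representable e 3 ->
  exists k, k <= 3 /\ is_representation_number e k.
Proof.
move=> H3.
case: (classic (k_representable e 0)) => H0.
  by exists 0; split => //; split => // j.
case: (classic (k_representable e 1)) => H1.
  by exists 1; split => //; split => // -[|j] //.
case: (classic (k_representable e 2)) => H2.
  by exists 2; split => //; split => // -[|[|j]] //.
by exists 3; split => //; split => // -[|[|[|j]]] //.
Qed.


Definition w3 : seq 'I_(2*3) := [:: @Ordinal 6 0 isT; @Ordinal 6 1 isT; @Ordinal 6 2 isT;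
  @Ordinal 6 3 isT; @Ordinal 6 4 isT; @Ordinal 6 5 isT].

Lemma mem_w3 (x : 'I_(2*3)) : x \in w3.
Proof. by case: x => [[|[|[|[|[|[|m]]]]]] Hm]. Qed.

Lemma w3_check0 : all (fun x : 'I_(2*3) => (count_mem x w3 == 1) && all (fun y : 'I_(2*3) => (x != y) ==>
   (C2n_21n 3 x y && ((restrict2 w3 x y == mkalt x y 2) || (restrict2 w3 x y == mkalt y x 2)))) w3) w3.
Proof. vm_compute. reflexivity. Qed.

Lemma w3_check : [forall x : 'I_(2*3), (count_mem x w3 == 1) && [forall y : 'I_(2*3), (x != y) ==>
   (C2n_21n 3 x y && ((restrict2 w3 x y == mkalt x y 2) || (restrict2 w3 x y == mkalt y x 2)))]].
Proof.
apply/forallP => x; move/allP: w3_check0 => /(_ x (mem_w3 x)) /andP [-> H] /=.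
by apply/forallP => y; move/allP: H => /(_ y (mem_w3 y)).
Qed.

Lemma K6 : word_representable (C2n_21n 3) /\ is_representation_number (C2n_21n 3) 1.
Proof.
have H := w3_check.
have R : represents (C2n_21n 3) w3.
  split.
    move=> v; move/forallP: H => /(_ v) /andP [/eqP c _].
    by rewrite -has_pred1 has_count c.
  move=> x y xy; move/forallP: H => /(_ x) /andP [_ /forallP /(_ y)].
  rewrite xy /= => /andP [-> /orP [/eqP E|/eqP E]]; split => // _; exists 2; [left|right]; exact: E.
split; first by exists w3.
split.
  exists w3; split => // v; move/forallP: H => /(_ v) /andP [/eqP c _]; exact: c.
move=> [|j] // _ [w [U [Hin _]]].
have := Hin (Ordinal (isT : 0 < 2*3)); rewrite -has_pred1 has_count U.
by [].
Qed.

Theorem theorem29 :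
  (forall n : nat, 3 < n ->
     word_representable (C2n_21n n) /\
     exists k : nat, k <= 3 /\ is_representation_number (C2n_21n n) k) /\
  (word_representable (C2n_21n 3) /\ is_representation_number (C2n_21n 3) 1).
Proof.
split; last exact: K6.
move=> n Hn; split; last exact: (min_rep _ (rep3 n Hn)).
by have [w [_ Hw]] := rep3 n Hn; exists w.
Qed.
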